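(* For a generic Hankel tensor $\mathcal{H}\in\operatorname{H}^3(\mathbb{C}^n)$, its border rank satisfies $\underline{\operatorname{rank}}(\mathcal{H})\ge\left\lfloor\frac{3n-1}{2}\right\rfloor$.
   Context: A tensor $\mathcal{H}\in\operatorname{T}^3(\mathbb{C}^n)$ is Hankel if $\mathcal{H}_{ijk}=h_{i+j+k-3}$ for some vector $h=(h_0,\dots,h_{3(n-1)})$; $\operatorname{H}^3(\mathbb{C}^n)\cong\mathbb{C}^{3n-2}$ is the space of such tensors and ''generic'' means outside a proper Zariski-closed subset. The border rank $\underline{\operatorname{rank}}(\mathcal{A})$ of $\mathcal{A}\in\mathbb{C}^n\otimes\mathbb{C}^n\otimes\mathbb{C}^n$ is the least $r$ such that $\mathcal{A}$ is a limit of tensors of the form $\sum_{i=1}^r u_i\otimes v_i\otimes w_i$. *)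

(* Defs.v *)
From Stdlib Require Import Reals.
Open Scope R_scope.

Definition C : Type := (R * R)%type.
Definition C0 : C := (0, 0).
Definition Cadd (x y : C) : C := (fst x + fst y, snd x + snd y).
Definition Cmul (x y : C) : C :=
  (fst x * fst y - snd x * snd y, fst x * snd y + snd x * fst y).

Fixpoint Csum (r : nat) (f : nat -> C) : C :=
  match r with
  | O => C0
  | S r' => Cadd (Csum r' f) (f r')
  end.

Definition Ccv (u : nat -> C) (l : C) : Prop :=
  Un_cv (fun m => fst (u m)) (fst l) /\ Un_cv (fun m => snd (u m)) (snd l).

(** Order-3 tensors in C^n (x) C^n (x) C^n: only entries with indices < n matter
    (0-based indexing). *)
Definition tensor : Type := nat -> nat -> nat -> C.

Definition rank_le (n r : nat) (T : tensor) : Prop :=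
  exists u v w : nat -> nat -> C,
    forall i j k, (i < n)%nat -> (j < n)%nat -> (k < n)%nat ->
      T i j k = Csum r (fun l => Cmul (Cmul (u l i) (v l j)) (w l k)).

Definition border_rank_le (n r : nat) (A : tensor) : Prop :=
  exists Ts : nat -> tensor,
    (forall m, rank_le n r (Ts m)) /\
    forall i j k, (i < n)%nat -> (j < n)%nat -> (k < n)%nat ->
      Ccv (fun m => Ts m i j k) (A i j k).

Definition border_rank_ge (n b : nat) (A : tensor) : Prop :=
  forall r, border_rank_le n r A -> (b <= r)%nat.

(** Hankel tensor with generating vector h = (h_0, ..., h_{3(n-1)}):
    H_{ijk} = h_{i+j+k} (0-based; equals h_{i+j+k-3} in 1-based indexing). *)
Definition hankel (h : nat -> C) : tensor := fun i j k => h (i + j + k)%nat.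

Inductive cpoly : Type :=
| PConst : C -> cpoly
| PVar : nat -> cpoly
| PAdd : cpoly -> cpoly -> cpoly
| PMul : cpoly -> cpoly -> cpoly.

Fixpoint peval (p : cpoly) (x : nat -> C) : C :=
  match p with
  | PConst c => c
  | PVar i => x i
  | PAdd p q => Cadd (peval p x) (peval q x)
  | PMul p q => Cmul (peval p x) (peval q x)
  end.

Fixpoint vars_lt (N : nat) (p : cpoly) : Prop :=
  match p with
  | PConst _ => True
  | PVar i => (i < N)%nat
  | PAdd p q => vars_lt N p /\ vars_lt N q
  | PMul p q => vars_lt N p /\ vars_lt N q
  end.

Definition zero_set (S : cpoly -> Prop) (x : nat -> C) : Prop :=
  forall p, S p -> peval p x = C0.

(** P holds for generic points of C^N: outside a proper Zariski-closed subset.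
    Points of C^N are functions nat -> C of which only coordinates < N matter. *)
Definition generic (N : nat) (P : (nat -> C) -> Prop) : Prop :=
  exists S : cpoly -> Prop,
    (forall p, S p -> vars_lt N p) /\
    (exists x, ~ zero_set S x) /\
    (forall x, ~ zero_set S x -> P x).

(* Main.v *)
Require Import Defs.
From Stdlib Require Import Reals.
From HB Require Import structures.
From mathcomp Require Import all_boot all_algebra all_fingroup.
From mathcomp Require Import complex Rstruct zify ring.
Import GRing.Theory.
Set Implicit Arguments. Unset Strict Implicit.

Module MP4.
Local Open Scope nat_scope.

Definition rowb n p := if p < n then 1 else if p < 2*n then 0 else 2.
Definition rowj n p := if p < n then p else if p < 2*n then p - n else p - 2*n + 1.
Definition colb n b p :=
  if p < n then (if p == 0 then 2 else if p <= b+1 then 0 else 2)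
  else if p < 2*n then (if p - n <= b+1 then 1 else 2)
  else (if p-2*n+1 <= n-b-1 then 0 else 1).
Definition colj n b p :=
  if p < n then (if p == 0 then 0 else if p <= b+1 then b+1-p else b+n-p)
  else if p < 2*n then (if p - n <= b+1 then b+1-(p-n) else n-(p-n))
  else (if p-2*n+1 <= n-b-1 then n-(p-2*n+1) else b+n-(p-2*n+1)).
Definition wt n b p :=
  if p < n then (if p == 0 then 1 else 0) else if p < 2*n then 2
  else (if p-2*n+1 == n-b-1 then 0 else 2).
Definition kcnz (rb cb : nat) : bool :=
  match rb, cb with 0,1 | 0,2 | 1,0 | 1,2 | 2,0 | 2,1 => true | _,_ => false end.
Definition sln (rb cb : nat) : nat :=
  match rb, cb with 0,1 => 2 | 0,2 => 1 | 1,0 => 2 | 1,2 => 0 | 2,0 => 1 | 2,1 => 0 | _,_ => 0 end.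
Definition sidxn n b (t : nat) : nat := match t with 0 => 0 | 1 => b | _ => n-1 end.
Definition hit n b rb cb j k : Prop :=
  kcnz rb cb /\ (sidxn n b (sln rb cb) + j + k = 0 \/ sidxn n b (sln rb cb) + j + k = b + n).

Ltac ifs := repeat (case: ifP => /=); try case: eqP => /=.

Lemma arith_bounds n b p : 0 < n -> (2*b+1 = n \/ 2*b+2 = n) -> p < 3*n-2 ->
  rowj n p < n /\ colj n b p < n /\ rowb n p < 3 /\ colb n b p < 3.
Proof.
move=> H1 H2 H3; rewrite /rowj /colj /rowb /colb.
repeat (case: ifP => /=); try (case: eqP => /=); lia.
Qed.

Lemma arith_diag n b p : 0 < n -> (2*b+1 = n \/ 2*b+2 = n) -> p < 3*n-2 ->
  hit n b (rowb n p) (colb n b p) (rowj n p) (colj n b p).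
Proof.
move=> H1 H2 H3; rewrite /hit /rowj /colj /rowb /colb.
repeat (case: ifP => /=); repeat (case: eqP => /=); lia.
Qed.

Lemma arith_wt n b p q : 0 < n -> (2*b+1 = n \/ 2*b+2 = n) -> p < 3*n-2 -> q < 3*n-2 ->
  p <> q -> hit n b (rowb n p) (colb n b q) (rowj n p) (colj n b q) -> wt n b q < wt n b p.
Proof.
move=> H1 H2 H3 H4 H5; rewrite /hit /rowj /colj /rowb /colb /wt.
repeat (case: ifP => /=); repeat (case: eqP => /=); lia.
Qed.

End MP4.
Import MP4.

Module MP2.
Local Open Scope nat_scope.
Local Open Scope ring_scope.

Lemma det_weight (R : idomainType) n (M : 'M[R]_n) (wt : 'I_n -> nat) :
  (forall i j, i != j -> M i j != 0 -> (wt j < wt i)%N) ->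
  (forall i, M i i != 0) -> \det M != 0.
Proof.
move=> Hw Hd.
have H0 : forall s : 'S_n, s != 1%g -> \prod_i M i (s i) = 0.
  move=> s s1; apply/eqP; apply: contraR s1 => /prodf_neq0 Hnz.
  apply/eqP/permP => i; rewrite perm1; apply/eqP.
  apply/negPn/negP => si.
  case: (@arg_minnP _ i (fun k => s k != k) wt si) => j sj jmin.
  have l1 : (wt (s j) < wt j)%N by apply: Hw; [rewrite eq_sym | exact: Hnz].
  have ssj : s (s j) != s j by apply: contra sj => /eqP /perm_inj ->.
  by have := jmin _ ssj; rewrite leqNgt l1.
rewrite /determinant (bigD1 1%g) //= [X in _ + X]big1 ?addr0.
  rewrite odd_perm1 expr0 mul1r; apply/prodf_neq0 => i _; by rewrite perm1.
by move=> s s1; rewrite H0 ?mulr0.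
Qed.

End MP2.
Import MP2.

Module MP3.
Local Open Scope nat_scope.
Local Open Scope ring_scope.

Section Kos.
Variable K : fieldType.
Variable n : nat.
Definition bb := ((n - 1) %/ 2)%N.
Definition sidx (t : nat) : nat := match t with 0 => 0 | 1 => bb | _ => (n-1)%N end.
Definition kc (rb cb : nat) : K :=
  match rb, cb with 0,1 => 1 | 0,2 => -1 | 1,0 => -1 | 1,2 => 1 | 2,0 => 1 | 2,1 => -1 | _,_ => 0 end.
Definition sl (rb cb : nat) : nat :=
  match rb, cb with 0,1 => 2 | 0,2 => 1 | 1,0 => 2 | 1,2 => 0 | 2,0 => 1 | 2,1 => 0 | _,_ => 0 end.
Definition Kent (t : nat -> nat -> nat -> K) (i j : nat) : K :=
  kc (i %/ n)%N (j %/ n)%N * t (sidx (sl (i %/ n)%N (j %/ n)%N)) (i %% n)%N (j %% n)%N.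
Definition Kmx t : 'M[K]_(3*n) := \matrix_(i, j) Kent t i j.

Lemma Kmx_sum r (f : nat -> nat -> nat -> nat -> K) :
  Kmx (fun i j k => \sum_(l < r) f l i j k) = \sum_(l < r) Kmx (f l).
Proof.
apply/matrixP => i j; rewrite !mxE summxE /Kent mulr_sumr.
by apply: eq_bigr => l _; rewrite mxE.
Qed.

Lemma rank_sum r (A : nat -> 'M[K]_(3*n)) :
  (forall l, \rank (A l) <= 2)%N -> (\rank (\sum_(l < r) A l)%R <= 2 * r)%N.
Proof.
move=> HA; elim: r => [|r IH]; first by rewrite big_ord0 mxrank0.
rewrite big_ord_recr /=. apply: leq_trans (mxrank_add _ _) _.
by rewrite mulnS addnC leq_add.
Qed.

Lemma sl_lt rb cb : (sl rb cb < 3)%N.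
Proof. by case: rb => [|[|[|rb]]]; case: cb => [|[|[|cb]]]. Qed.

Definition Mone (v : nat -> K) : 'M[K]_(3*n, 3) :=
  \matrix_(i, e) (((i %/ n)%N == e)%:R * v (i %% n)%N).
Definition Mtwo (a w : nat -> K) : 'M[K]_(3, 3*n) :=
  \matrix_(e, j) (kc e (j %/ n)%N * a (sidx (sl e (j %/ n)%N)) * w (j %% n)%N).

Lemma rank_one (a v w : nat -> K) :
  (\rank (Kmx (fun i j k => (a i * v j * w k)%R)) <= 2)%N.
Proof.
pose M1 := Mone v; pose M2 := Mtwo a w.
have E : Kmx (fun i j k => a i * v j * w k) = M1 *m M2.
  apply/matrixP => i j; rewrite !mxE /Kent.
  have hi : (i %/ n < 3)%N.
    case: n i => [|m] [i /= Hi]; first by rewrite muln0 in Hi.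
    by rewrite ltn_divLR // mulnC.
  rewrite (bigD1 (Ordinal hi)) //= big1 ?addr0.
    rewrite !mxE /= eqxx mul1r; ring.
  move=> e He; rewrite !mxE; case: eqP => [Ee|]; last by rewrite !mul0r.
  by case/eqP: He; apply: val_inj; rewrite /= Ee.
rewrite E; apply: leq_trans (mxrankM_maxr _ _) _.
set nu : 'rV[K]_3 := \row_e a (sidx e).
case: (eqVneq nu 0) => Hnu.
  suff -> : M2 = 0 by rewrite mxrank0.
  apply/matrixP => e j; rewrite !mxE.
  have : nu 0 (Ordinal (sl_lt e (j %/ n)%N)) = 0 by rewrite Hnu mxE.
  by rewrite mxE /= => ->; rewrite mulr0 mul0r.
have Hk : (nu <= kermx M2)%MS.
  apply/sub_kermxP/matrixP => i j; rewrite !mxE !big_ord_recr big_ord0 /= add0r !mxE /=.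
  case: (j %/ n)%N => [|[|[|m]]] /=; ring.
have := mxrankS Hk; rewrite mxrank_ker rank_rV Hnu.
case: (\rank M2) (rank_leq_row M2) => [|[|[|[|m]]]] //.
Qed.
End Kos.

End MP3.
Import MP3.

Module MP1.
Local Open Scope ring_scope.
Notation F := (complex R).
Definition phi (x : Defs.C) : F := Complex (fst x) (snd x).
Definition unphi (z : F) : Defs.C := (Re z, Im z).
Lemma unphiK z : phi (unphi z) = z. Proof. by case: z. Qed.
Lemma phi_add x y : phi (Cadd x y) = phi x + phi y. Proof. by case: x; case: y. Qed.
Lemma phi_mul x y : phi (Cmul x y) = phi x * phi y.
Proof. by case: x => a b; case: y => c d. Qed.
Lemma phi0 : phi C0 = 0. Proof. by []. Qed.
Lemma phi_inj x y : phi x = phi y -> x = y.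
Proof. by case: x => a b; case: y => c d [-> ->]. Qed.

Section PF.
Variable X : Type.
Variable B : (X -> F) -> Prop.
Inductive polyfun : (X -> F) -> Prop :=
| pf_const c : polyfun (fun _ => c)
| pf_basis b : B b -> polyfun b
| pf_add f g : polyfun f -> polyfun g -> polyfun (fun x => f x + g x)
| pf_mul f g : polyfun f -> polyfun g -> polyfun (fun x => f x * g x)
| pf_ext f g : polyfun f -> (forall x, f x = g x) -> polyfun g.

Lemma pf_sum (I : Type) (r : seq I) (P : pred I) (G : I -> X -> F) :
  (forall i, polyfun (G i)) -> polyfun (fun x => \sum_(i <- r | P i) G i x).
Proof.
move=> HG; elim: r => [|i r IH].
  by apply: (pf_ext (pf_const 0)) => x; rewrite big_nil.
case: (boolP (P i)) => Pi.
  by apply: (pf_ext (pf_add (HG i) IH)) => x; rewrite big_cons Pi.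
by apply: (pf_ext IH) => x; rewrite big_cons (negbTE Pi).
Qed.

Lemma pf_prod (I : Type) (r : seq I) (P : pred I) (G : I -> X -> F) :
  (forall i, polyfun (G i)) -> polyfun (fun x => \prod_(i <- r | P i) G i x).
Proof.
move=> HG; elim: r => [|i r IH].
  by apply: (pf_ext (pf_const 1)) => x; rewrite big_nil.
case: (boolP (P i)) => Pi.
  by apply: (pf_ext (pf_mul (HG i) IH)) => x; rewrite big_cons Pi.
by apply: (pf_ext IH) => x; rewrite big_cons (negbTE Pi).
Qed.

Definition Fcv (u : nat -> F) (l : F) :=
  Un_cv (fun m => Re (u m)) (Re l) /\ Un_cv (fun m => Im (u m)) (Im l).

Lemma ReD (a b : F) : Re (a + b) = (Re a + Re b)%R. Proof. by case: a; case: b. Qed.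
Lemma ImD (a b : F) : Im (a + b) = (Im a + Im b)%R. Proof. by case: a; case: b. Qed.
Lemma ReM (a b : F) : Re (a * b) = (Re a * Re b - Im a * Im b)%R. Proof. by case: a; case: b. Qed.
Lemma ImM (a b : F) : Im (a * b) = (Re a * Im b + Im a * Re b)%R. Proof. by case: a; case: b. Qed.
Lemma Un_cv_ext (u v : nat -> R) l : (forall m, u m = v m) -> Un_cv u l -> Un_cv v l.
Proof. move=> E H eps Heps; case: (H eps Heps) => N HN; exists N => m Hm; rewrite -E; exact: HN. Qed.

Lemma pf_cont f : polyfun f -> forall (xs : nat -> X) x,
  (forall b, B b -> Fcv (fun m => b (xs m)) (b x)) -> Fcv (fun m => f (xs m)) (f x).
Proof.
elim=> {f} [c|b Bb|f g _ IHf _ IHg|f g _ IHf _ IHg|f g _ IH E] xs x HB.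
- by split=> eps Heps; exists 0%nat => m _; rewrite /R_dist Rminus_diag Rabs_R0.
- exact: HB.
- case: (IHf xs x HB) => [H1 H2]; case: (IHg xs x HB) => [H3 H4].
  split.
    rewrite ReD; apply: (Un_cv_ext _ (CV_plus _ _ _ _ H1 H3)) => m; by rewrite ReD.
  rewrite ImD; apply: (Un_cv_ext _ (CV_plus _ _ _ _ H2 H4)) => m; by rewrite ImD.
- case: (IHf xs x HB) => [H1 H2]; case: (IHg xs x HB) => [H3 H4].
  split.
    rewrite ReM; apply: (Un_cv_ext _ (CV_minus _ _ _ _ (CV_mult _ _ _ _ H1 H3) (CV_mult _ _ _ _ H2 H4))) => m; by rewrite ReM.
  rewrite ImM; apply: (Un_cv_ext _ (CV_plus _ _ _ _ (CV_mult _ _ _ _ H1 H4) (CV_mult _ _ _ _ H2 H3))) => m; by rewrite ImM.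
- rewrite -E; case: (IH xs x HB) => H1 H2; split; apply: Un_cv_ext H1 || apply: Un_cv_ext H2; move=> m; by rewrite E.
Qed.
End PF.

Definition Bh (N : nat) (b : (nat -> Defs.C) -> F) :=
  exists m, (m < N)%coq_nat /\ forall h, b h = phi (h m).

Lemma pf_cpoly N f : polyfun (Bh N) f ->
  exists p, vars_lt N p /\ forall h, phi (peval p h) = f h.
Proof.
elim=> {f} [c|b [m [Hm Hb]]|f g _ [p [Vp Hp]] _ [q [Vq Hq]]|f g _ [p [Vp Hp]] _ [q [Vq Hq]]|f g _ [p [Vp Hp]] E].
- by exists (PConst (unphi c)); split=> // h; rewrite /= unphiK.
- by exists (PVar m); split=> // h; rewrite Hb.
- by exists (PAdd p q); split=> // h; rewrite /= phi_add Hp Hq.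
- by exists (PMul p q); split=> // h; rewrite /= phi_mul Hp Hq.
- by exists p; split=> // h; rewrite Hp E.
Qed.

Lemma pf_comp (X Y : Type) (BX : (X -> F) -> Prop) (BY : (Y -> F) -> Prop)
  (g : Y -> X) f : polyfun BX f ->
  (forall b, BX b -> polyfun BY (fun y => b (g y))) -> polyfun BY (fun y => f (g y)).
Proof.
move=> Hf HB; elim: Hf => {f} [c|b Bb|f1 f2 _ I1 _ I2|f1 f2 _ I1 _ I2|f1 f2 _ I E].
- exact: pf_const.
- exact: HB.
- exact: pf_add.
- exact: pf_mul.
- by apply: (pf_ext I) => y; rewrite E.
Qed.

End MP1.
Import MP1.

Local Open Scope nat_scope.

Lemma bb_rel n : (0 < n)%N -> 2 * bb n + 1 = n \/ 2 * bb n + 2 = n.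
Proof. rewrite /bb => H. lia. Qed.

Lemma sidx_lt n t : (0 < n)%N -> (sidx n t < n)%N.
Proof. move=> H; case: t => [|[|t]] //=; rewrite /bb; lia. Qed.

Lemma sidxE n t : sidx n t = sidxn n (bb n) t.
Proof. by case: t => [|[|t]]. Qed.
Lemma slE rb cb : sl rb cb = sln rb cb.
Proof. by case: rb => [|[|[|rb]]]; case: cb => [|[|[|cb]]]. Qed.

Lemma sig_lt n p : (p < 3*n-2)%N -> (rowb n p * n + rowj n p < 3*n)%N.
Proof.
move=> Hp; have Hn : (0 < n)%N by lia.
case: (arith_bounds Hn (bb_rel Hn) Hp) => [H1 [H2 [H3 H4]]]; nia.
Qed.
Lemma tau_lt n p : (p < 3*n-2)%N -> (colb n (bb n) p * n + colj n (bb n) p < 3*n)%N.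
Proof.
move=> Hp; have Hn : (0 < n)%N by lia.
case: (arith_bounds Hn (bb_rel Hn) Hp) => [H1 [H2 [H3 H4]]]; nia.
Qed.

Definition sigma n (p : 'I_(3*n-2)) : 'I_(3*n) := Ordinal (sig_lt (ltn_ord p)).
Definition tau n (p : 'I_(3*n-2)) : 'I_(3*n) := Ordinal (tau_lt (ltn_ord p)).

Lemma divmod_block n a j : (0 < n)%N -> (j < n)%N -> ((a * n + j) %/ n = a)%N /\ ((a * n + j) %% n = j)%N.
Proof. move=> Hn Hj; rewrite divnMDl // modnMDl divn_small // modn_small //; by rewrite addn0. Qed.

Local Open Scope ring_scope.
Definition Mw n (t : nat -> nat -> nat -> F) : 'M[F]_(3*n-2) :=
  mxsub (@sigma n) (@tau n) (Kmx n t).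

Lemma MwE n (t : nat -> nat -> nat -> F) (p q : 'I_(3*n-2)) :
  Mw n t p q = kc F (rowb n p) (colb n (bb n) q) *
    t (sidx n (sl (rowb n p) (colb n (bb n) q))) (rowj n p) (colj n (bb n) q).
Proof.
have Hn : (0 < n)%N by case: p => p /=; lia.
case: (arith_bounds Hn (bb_rel Hn) (ltn_ord p)) => [H1 _].
case: (arith_bounds Hn (bb_rel Hn) (ltn_ord q)) => [_ [H2 _]].
rewrite /Mw !mxE /Kent /=.
case: (divmod_block (rowb n p) Hn H1) => -> ->.
by case: (divmod_block (colb n (bb n) q) Hn H2) => -> ->.
Qed.

Lemma kc_nz rb cb : kcnz rb cb -> kc F rb cb != 0.
Proof.
by case: rb => [|[|[|rb]]]; case: cb => [|[|[|cb]]] //= _; rewrite ?oppr_eq0 oner_neq0.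
Qed.
Lemma kc_z rb cb : ~~ kcnz rb cb -> kc F rb cb = 0.
Proof. by case: rb => [|[|[|rb]]]; case: cb => [|[|[|cb]]]. Qed.

Definition hw n (m : nat) : Defs.C :=
  if (m == 0)%N || (m == bb n + n)%N then (1%R, 0%R) else (0%R, 0%R).

Lemma phi_hw n m : phi (hw n m) = if (m == 0)%N || (m == bb n + n)%N then 1 else 0.
Proof. by rewrite /hw; case: ifP. Qed.

Lemma witness_det n : (0 < n)%N ->
  \det (Mw n (fun i j k => phi (hankel (hw n) i j k))) != 0.
Proof.
move=> Hn.
apply: (@det_weight _ _ _ (fun p => wt n (bb n) p)).
  move=> p q pq; rewrite MwE /hankel !plusE phi_hw.
  case: (boolP (kcnz (rowb n p) (colb n (bb n) q))) => Hk; last by rewrite kc_z // mul0r eqxx.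
  case: ifP => Hm; last by rewrite mulr0 eqxx.
  move=> _; apply: (arith_wt Hn (bb_rel Hn) (ltn_ord p) (ltn_ord q)).
    by move=> E; move/eqP: pq; apply; apply: val_inj.
  split=> //; rewrite -sidxE -slE; case/orP: Hm => /eqP ->; by [left | right].
move=> p; rewrite MwE /hankel !plusE phi_hw.
case: (arith_diag Hn (bb_rel Hn) (ltn_ord p)) => Hk Hs.
rewrite -sidxE -slE in Hs.
have -> : ((sidx n (sl (rowb n p) (colb n (bb n) p)) + rowj n p + colj n (bb n) p == 0)%N ||
  (sidx n (sl (rowb n p) (colb n (bb n) p)) + rowj n p + colj n (bb n) p == bb n + n)%N) = true.
  by case: Hs => ->; rewrite eqxx ?orbT.
by rewrite mulr1 kc_nz.
Qed.

Lemma Kmx_ext n (t1 t2 : nat -> nat -> nat -> F) : (0 < n)%N ->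
  (forall i j k, (i < n)%N -> (j < n)%N -> (k < n)%N -> t1 i j k = t2 i j k) ->
  Kmx n t1 = Kmx n t2.
Proof.
move=> Hn E; apply/matrixP => i j; rewrite !mxE /Kent E //.
  exact: sidx_lt.
all: exact: ltn_pmod.
Qed.

Lemma phi_Csum r f : phi (Csum r f) = \sum_(l < r) phi (f l).
Proof.
elim: r => [|r IH]; first by rewrite big_ord0.
by rewrite big_ord_recr /= phi_add IH.
Qed.

Lemma rank_le_Kmx n r T : (0 < n)%N -> rank_le n r T ->
  (\rank (Kmx n (fun i j k => phi (T i j k))) <= 2 * r)%N.
Proof.
move=> Hn [u [v [w E]]].
rewrite (@Kmx_ext n _ (fun i j k => \sum_(l < r) (phi (u l i) * phi (v l j) * phi (w l k)))) //.
  rewrite (Kmx_sum n r (fun l i j k => phi (u l i) * phi (v l j) * phi (w l k))).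
  apply: (@rank_sum F n r (fun l => Kmx n (fun i j k => phi (u l i) * phi (v l j) * phi (w l k)))) => l; exact: (rank_one n (fun i => phi (u l i)) (fun j => phi (v l j)) (fun k => phi (w l k))).
move=> i j k Hi Hj Hk; rewrite E; try (apply/ltP; assumption).
rewrite phi_Csum; apply: eq_bigr => l _; by rewrite !phi_mul.
Qed.

Lemma rank_mxsub (K : fieldType) m m' n' (f : 'I_m' -> 'I_m) (g : 'I_n' -> 'I_m) (A : 'M[K]_m) :
  (\rank (mxsub f g A) <= \rank A)%N.
Proof.
have -> : mxsub f g A = rowsub f (colsub g A) by apply/matrixP => i j; rewrite !mxE.
rewrite rowsubE; apply: leq_trans (mxrankM_maxr _ _) _.
have -> : colsub g A = (rowsub g A^T)^T by apply/matrixP => i j; rewrite !mxE.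
rewrite mxrank_tr rowsubE; apply: leq_trans (mxrankM_maxr _ _) _.
by rewrite mxrank_tr.
Qed.

Lemma det_Mw_zero n r T : (0 < n)%N -> rank_le n r T -> (2 * r < 3 * n - 2)%N ->
  \det (Mw n (fun i j k => phi (T i j k))) = 0.
Proof.
move=> Hn HT Hr; apply/eqP; apply/negPn/negP => Hd.
have U : Mw n (fun i j k => phi (T i j k)) \in unitmx by rewrite unitmxE unitfE.
have := mxrank_unit U; move: (rank_le_Kmx Hn HT) (rank_mxsub (@sigma n) (@tau n) (Kmx n (fun i j k => phi (T i j k)))).
rewrite /Mw => h1 h2 h3; lia.
Qed.

Definition BT n (b : (nat -> nat -> nat -> Defs.C) -> F) :=
  exists i j k, (i < n)%N /\ (j < n)%N /\ (k < n)%N /\ forall T, b T = phi (T i j k).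

Definition GT n (T : nat -> nat -> nat -> Defs.C) : F :=
  \det (Mw n (fun i j k => phi (T i j k))).

Lemma GT_pf n : (0 < n)%N -> polyfun (BT n) (GT n).
Proof.
move=> Hn.
apply: (@pf_ext _ _ (fun T => \sum_(s : 'S_(3*n-2)) ((-1) ^+ s *
   \prod_i Mw n (fun i j k => phi (T i j k)) i (s i)))); last by [].
apply: pf_sum => s; apply: pf_mul; first exact: pf_const.
apply: pf_prod => i.
set q := s i.
apply: (@pf_ext _ _ (fun T => kc F (rowb n i) (colb n (bb n) q) *
    phi (T (sidx n (sl (rowb n i) (colb n (bb n) q))) (rowj n i) (colj n (bb n) q)))); last first.
  by move=> T; rewrite MwE.
apply: pf_mul; first exact: pf_const.
apply: pf_basis.
case: (arith_bounds Hn (bb_rel Hn) (ltn_ord i)) => [H1 _].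
case: (arith_bounds Hn (bb_rel Hn) (ltn_ord q)) => [_ [H2 _]].
exists (sidx n (sl (rowb n i) (colb n (bb n) q))), (rowj n i), (colj n (bb n) q).
by split; [exact: sidx_lt | split; [exact: H1 | split; [exact: H2 | move=> T; reflexivity]]].
Qed.

Lemma G_pf n : (0 < n)%N -> polyfun (Bh (3 * n - 2)) (fun h => GT n (hankel h)).
Proof.
move=> Hn; apply: (pf_comp (GT_pf Hn)) => b [i [j [k [Hi [Hj [Hk Hb]]]]]].
apply: pf_basis; exists (i + j + k)%coq_nat; split.
  apply/ltP; rewrite !plusE; lia.
by move=> h; rewrite Hb.
Qed.

Lemma GT_limit n r Ts A : (0 < n)%N -> (forall m, rank_le n r (Ts m)) ->
  (forall i j k, (i < n)%coq_nat -> (j < n)%coq_nat -> (k < n)%coq_nat ->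
     Ccv (fun m => Ts m i j k) (A i j k)) ->
  (2 * r < 3 * n - 2)%N -> GT n A = 0.
Proof.
move=> Hn HR Hcv Hr.
have Hc := @pf_cont _ _ _ (GT_pf Hn) Ts A.
case: Hc.
  move=> b [i [j [k [Hi [Hj [Hk Hb]]]]]].
  case: (Hcv i j k (elimT ltP Hi) (elimT ltP Hj) (elimT ltP Hk)) => C1 C2.
  split; rewrite Hb; [apply: Un_cv_ext C1 | apply: Un_cv_ext C2] => m; by rewrite Hb.
move=> C1 C2.
have Z : forall m, GT n (Ts m) = 0 by move=> m; apply: (det_Mw_zero Hn (HR m) Hr).
have K0 : Un_cv (fun _ : nat => 0%R) 0%R.
  by move=> eps He; exists 0%N => m _; rewrite /R_dist Rminus_diag Rabs_R0.
have E1 : Re (GT n A) = 0%R.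
  apply: (UL_sequence _ _ _ C1); apply: Un_cv_ext K0 => m; by rewrite Z.
have E2 : Im (GT n A) = 0%R.
  apply: (UL_sequence _ _ _ C2); apply: Un_cv_ext K0 => m; by rewrite Z.
by move: E1 E2; case: (GT n A) => a b /= -> ->.
Qed.

Theorem theorem5p2 (n : nat) :
  generic (Nat.sub (Nat.mul 3 n) 2)
    (fun h => border_rank_ge n (Nat.div (Nat.sub (Nat.mul 3 n) 1) 2) (hankel h)).
Proof.
case: (posnP n) => [-> | Hn].
  exists (fun p => p = PConst (1%R, 0%R)); split; first by move=> p ->.
  split.
    exists (fun _ => C0) => H; have := H _ erefl; case => /R1_neq_R0 //.
  by move=> x _ r _; apply/leP.
have [p [Vp Hp]] := pf_cpoly (G_pf Hn).
exists (fun q => q = p); split; first by move=> q ->.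
split.
  exists (hw n) => H; have Hz := H p erefl.
  have := witness_det Hn; rewrite -/(GT n (hankel (hw n))) -Hp Hz phi0 eqxx //.
move=> x Hx r [Ts [HTs Hcv]].
have Hpx : GT n (hankel x) <> 0.
  rewrite -Hp => E; apply: Hx => q ->; apply: phi_inj; by rewrite E phi0.
case: (Nat.le_gt_cases ((3 * n - 1) / 2) r) => // Hlt.
exfalso; apply: Hpx; apply: (GT_limit Hn HTs Hcv).
apply/ltP.
have := Nat.div_mod (3 * n - 1) 2; have := Nat.mod_upper_bound (3 * n - 1) 2.
move: Hlt Hn; rewrite -!multE -!minusE; lia.
Qed.
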